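(* Let $\alpha\in\mathbb{N}_0$. For all $n\in\mathbb{N}$ (i.e. $n\ge1$), $$(\alpha+2)!\,\big[L_{2,x}^{\alpha}+n\big]T_n^{\alpha}(x)=-(n+1)_{\alpha}(\alpha+1)(\alpha+2)\,L_{n-1}^{\alpha+2}(x),$$ $$\big[L_{2\alpha+4,x}^{\alpha}+(n)_{\alpha+2}\big]L_n^{\alpha}(x)=(n+1)_{\alpha}(\alpha+1)(\alpha+2)\,L_{n-1}^{\alpha+2}(x).$$ For $n=0$ both left-hand sides vanish.
   Context: $D_x^i$ is the $i$-fold derivative; $(a)_k$ is the Pochhammer symbol. $L_n^{\gamma}(x)=\frac{(\gamma+1)_n}{n!}{}_1F_1(-n;\gamma+1;x)$ are the Laguerre polynomials. $L_{2,x}^{\alpha}y=xy''+(\alpha+1-x)y'$ and $L_{2\alpha+4,x}^{\alpha}y(x)=(-1)^{\alpha+1}e^x x\,D_x^{\alpha+2}\{e^{-x}D_x^{\alpha+2}[x^{\alpha+1}y(x)]\}$. $T_0^\alpha=0$ and for $n\ge1$, $T_n^{\alpha}(x)=-t_n^{\alpha}\,x\,L_{n-1}^{\alpha+2}(x)$ with $t_n^{\alpha}=(\alpha+2)_{n-1}/n!$. *)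

(* Defs.v *)
From HB Require Import structures.
From mathcomp Require Import all_boot all_order all_algebra.
Set Implicit Arguments. Unset Strict Implicit. Unset Printing Implicit Defensive.
Import Order.TTheory GRing.Theory Num.Theory.
Local Open Scope ring_scope.

Definition poch {R : numFieldType} (a : R) (k : nat) : R :=
  \prod_(i < k) (a + i%:R).

(* Terminating confluent hypergeometric polynomial 1F1(-n; b; x)
   = \sum_{k=0}^n (-n)_k / ((b)_k k!) x^k  (terms with k > n vanish). *)
Definition hyp1F1neg {R : numFieldType} (n : nat) (b : R) : {poly R} :=
  \sum_(k < n.+1) ((poch (- (n%:R)) k) / (poch b k * (k`!)%:R)) *: 'X^k.

Definition Laguerre {R : numFieldType} (n : nat) (gamma : R) : {poly R} :=
  (poch (gamma + 1) n / (n`!)%:R) *: hyp1F1neg n (gamma + 1).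

Definition L2op {R : numFieldType} (alpha : nat) (y : {poly R}) : {poly R} :=
  'X * y^`(2) + ((alpha.+1)%:R%:P - 'X) * y^`().

(* For a polynomial q, e^x D^k (e^{-x} q(x)) = (D - 1)^k q(x) (conjugation
   identity e^x D e^{-x} = D - 1); this is how the exponential weight
   in the higher-order operator is expressed on polynomials. *)
Definition expConjD {R : numFieldType} (k : nat) (q : {poly R}) : {poly R} :=
  iter k (fun p => p^`() - p) q.

(* L_{2alpha+4,x}^alpha y = (-1)^(alpha+1) e^x x D^{alpha+2} { e^{-x} D^{alpha+2} [x^{alpha+1} y] }. *)
Definition L4op {R : numFieldType} (alpha : nat) (y : {poly R}) : {poly R} :=
  ((-1) ^+ alpha.+1) *: ('X * expConjD alpha.+2 (('X^(alpha.+1) * y)^`(alpha.+2))).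

Definition tcoef {R : numFieldType} (n alpha : nat) : R :=
  poch (alpha.+2)%:R n.-1 / (n`!)%:R.

Definition Tpoly {R : numFieldType} (n alpha : nat) : {poly R} :=
  if n is 0 then 0 else
  - (tcoef n alpha *: ('X * Laguerre n.-1 (alpha.+2)%:R)).

(* Main.v *)
Require Import Defs.
From HB Require Import structures.
From mathcomp Require Import all_boot all_order all_algebra.
From mathcomp Require Import ring lra zify.
Import Order.TTheory GRing.Theory Num.Theory.
Local Open Scope ring_scope.



Lemma fact_neq0 (R : numFieldType) n : (n`!)%:R != 0 :> R.
Proof. by rewrite pnatr_eq0 -lt0n fact_gt0. Qed.

Lemma natS_neq0 (R : numFieldType) n : (n.+1)%:R != 0 :> R.
Proof. by rewrite pnatr_eq0. Qed.

Lemma binR (R : numFieldType) x y :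
  ('C(x+y, x))%:R = (x+y)`!%:R / (x`!%:R * y`!%:R) :> R.
Proof.
have := bin_fact (leq_addr y x); rewrite addKn => /(congr1 (fun m => m%:R : R)).
rewrite !natrM => <-. field. by rewrite !fact_neq0.
Qed.

Lemma factSR (R : numFieldType) n : ((n.+1)`!)%:R = n.+1%:R * (n`!)%:R :> R.
Proof. by rewrite factS natrM. Qed.



Lemma pochS (R : numFieldType) (a : R) k : poch a k.+1 = poch a k * (a + k%:R).
Proof. by rewrite /poch big_ord_recr. Qed.

Lemma poch0 (R : numFieldType) (a : R) : poch a 0 = 1.
Proof. by rewrite /poch big_ord0. Qed.

Lemma pochnat (R : numFieldType) m k :
  poch (m.+1)%:R k = (m+k)`!%:R / m`!%:R :> R.
Proof.
elim: k => [|k IH]; first by rewrite poch0 addn0 divff // fact_neq0.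
rewrite pochS IH addnS factSR -natrD addSn.
field. by rewrite fact_neq0.
Qed.

Lemma pochneg (R : numFieldType) n k : (k <= n)%N ->
  poch (- n%:R) k = (-1)^+k * n`!%:R / (n-k)`!%:R :> R.
Proof.
elim: k => [|k IH] Hk; first by rewrite poch0 subn0 expr0 mul1r divff // fact_neq0.
rewrite pochS IH ?(ltnW Hk) //.
have E : (n - k = (n - k.+1).+1)%N by rewrite subnSK.
rewrite E factSR -E natrB ?(ltnW Hk) // exprS.
have -> : (- n%:R + k%:R : R) = - (n%:R - k%:R) by ring.
field. rewrite fact_neq0 /= subr_eq0 eqr_nat. by rewrite neq_ltn Hk orbT.
Qed.

Lemma pochneg0 (R : numFieldType) n k : (n < k)%N -> poch (- n%:R) k = 0 :> R.
Proof.
move=> H; rewrite /poch (bigD1 (Ordinal H)) //= addNr mul0r //.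
Qed.



Definition lc {R : numFieldType} (N g k : nat) : R :=
  (-1)^+k * ('C(N, g+k))%:R / (k`!)%:R.
Definition P {R : numFieldType} (N g : nat) : {poly R} := \poly_(k < N.+1) lc N g k.

Lemma lc_small (R : numFieldType) N g k : (N < g + k)%N -> lc N g k = 0 :> R.
Proof. by move=> H; rewrite /lc bin_small // mulr0 mul0r. Qed.

Lemma coefP (R : numFieldType) N g k : (P N g : {poly R})`_k = lc N g k.
Proof.
rewrite coef_poly; case: ifP => // /negbT; rewrite -leqNgt => H.
by rewrite lc_small // ltn_addl.
Qed.

Lemma LaguerreP (R : numFieldType) n g : Laguerre n g%:R = P (n+g) g :> {poly R}.
Proof.
apply/polyP => i; rewrite coefP /Laguerre coefZ.
have -> : hyp1F1neg n (g%:R + 1) = \poly_(k < n.+1) ((poch (- (n%:R)) k) / (poch (g%:R + 1) k * (k`!)%:R)) :> {poly R}.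
  by rewrite poly_def.
rewrite coef_poly.
case: ltnP => Hi.
  have [d ->] : exists d, n = (i + d)%N by exists (n - i)%N; rewrite subnKC.
  rewrite natr1 !pochnat pochneg ?leq_addr // /lc.
  have -> : (i + d - i = d)%N by lia.
  have -> : (i + d + g = (g + i) + d)%N by ring.
  rewrite binR !addnA. field. by rewrite !fact_neq0.
by rewrite mulr0 lc_small // addnC ltn_add2l.
Qed.



Lemma stepP (R : numFieldType) N g :
  (P N g : {poly R})^`() - P N g = - P N.+1 g.+1.
Proof.
apply/polyP => i; rewrite coefB coef_deriv coefN !coefP /lc.
rewrite addnS addSn binS natrD factSR exprS -mulr_natr.
field. by rewrite fact_neq0 /= addrC natr1 natS_neq0.
Qed.

Lemma expConjDS (R : numFieldType) m (q : {poly R}) :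
  expConjD m.+1 q = (expConjD m q)^`() - expConjD m q.
Proof. by rewrite /expConjD iterS. Qed.

Lemma expZ (R : numFieldType) m (c : R) p :
  expConjD m (c *: p) = c *: expConjD m p.
Proof.
elim: m => [|m IH] //; by rewrite !expConjDS IH derivZ scalerBr.
Qed.

Lemma expD (R : numFieldType) m (p q : {poly R}) :
  expConjD m (p + q) = expConjD m p + expConjD m q.
Proof.
elim: m => [|m IH] //; rewrite !expConjDS IH derivD. ring.
Qed.

Lemma iterP (R : numFieldType) m N g :
  expConjD m (P N g : {poly R}) = (-1)^+m *: P (N+m) (g+m).
Proof.
elim: m => [|m IH]; first by rewrite expr0 scale1r !addn0.
rewrite expConjDS IH derivZ -scalerBr stepP !addnS exprS scalerN -scalerA scaleN1r.
by [].
Qed.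



Ltac sidec := rewrite ?fact_neq0 /= ?nat1r -?natrD ?pnatr_eq0 ?(addrC 1) ?natr1 ?natS_neq0 //.

Lemma ffactR (R : numFieldType) k j : ((k + j)^_k)%:R = (k+j)`!%:R / j`!%:R :> R.
Proof.
have := ffact_fact (leq_addr j k); rewrite addKn => /(congr1 (fun m => m%:R : R)).
rewrite natrM => <-. field. by rewrite fact_neq0.
Qed.

Lemma Qlem (R : numFieldType) a m :
  ('X^(a.+1) * P (m.+1 + a) a : {poly R})^`(a.+2) =
  - ((m+a+2)`!%:R/(m.+1)`!%:R) *: P m.+1 1 + ((m+a+1)`!%:R / m`!%:R) *: P m 1.
Proof.
apply/polyP => j; rewrite coef_derivn coefXnM coefD !coefZ !coefP.
rewrite ltnNge (leq_trans (leqnSn _) (leq_addr _ _)) /=.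
have -> : (a.+2 + j - a.+1 = j.+1)%N by lia.
rewrite -(mulr_natr (lc _ _ _)) ffactR.
case: (leqP j m) => Hj; last first.
  rewrite !lc_small ?mulr0 ?mul0r ?oppr0 ?addr0 //; lia.
have [d ->] : exists d, m = (j + d)%N by exists (m - j)%N; rewrite subnKC.
rewrite /lc !add1n.
have -> : ((j + d).+1 + a = (a + j.+1) + d)%N by lia.
have -> : ((j + d).+1 = j.+1 + d)%N by lia.
rewrite !binR.
have -> : ((j + d + a + 1) = (a + j.+1 + d))%N by lia.
have -> : ((j + d + a + 2) = (a + j.+1 + d).+1)%N by lia.
have -> : ((a.+2 + j) = (a + j.+1).+1)%N by lia.
rewrite (factSR _ (a + j.+1 + d)) (factSR _ (a + j.+1)) exprS.
case: d Hj => [|e] Hj.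
  rewrite bin_small ?addn0; last lia.
  rewrite fact0 (factSR _ j).
  field. by sidec.
have -> : (j + e.+1 = j.+1 + e)%N by lia.
rewrite binR (factSR _ e) (factSR _ j).
field. by sidec.
Qed.

Lemma binSR (R : numFieldType) x y :
  ('C(x + y, x.+1))%:R = y%:R * ('C(x+y, x))%:R / x.+1%:R :> R.
Proof.
have := mul_bin_left (x+y) x; rewrite addKn => /(congr1 (fun m => m%:R : R)).
rewrite !natrM => H. apply: (mulIf (natS_neq0 R x)).
rewrite mulrC H. field. by sidec.
Qed.



Lemma Fin (R : numFieldType) a m :
 'X * (((m+a+2)`!%:R/(m.+1)`!%:R) *: P (m.+1 + a.+2) (1 + a.+2)
       - ((m+a+1)`!%:R / m`!%:R) *: P (m + a.+2) (1 + a.+2))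
 + ((m + a.+2)`!%:R / m`!%:R) *: P (m.+1 + a) a
 = (((m.+1 + a)`!%:R / (m.+1)`!%:R) * a.+1%:R * a.+2%:R) *: P (m + a.+2) a.+2 :> {poly R}.
Proof.
apply/polyP => i; rewrite coefD coefXM !coefZ coefB !coefZ !coefP.
case: i => [|k] /=.
  rewrite add0r /lc !expr0 !addn0 fact0.
  have -> : (m.+1 + a = a + m.+1)%N by lia.
  have -> : (m + a.+2 = a.+2 + m)%N by lia.
  rewrite !binR.
  have -> : (a + m.+1 = (a + m).+1)%N by lia.
  have -> : (a.+2 + m = (a + m).+2)%N by lia.
  rewrite (factSR _ (a+m).+1) (factSR _ m) (factSR _ a.+1) (factSR _ a).
  field. by sidec.
case: (leqP k m) => Hk; last first.
  rewrite !lc_small ?mulr0 ?subrr ?addr0 //; lia.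
have [d ->] : exists d, m = (k + d)%N by exists (m - k)%N; rewrite subnKC.
rewrite /lc !exprS.
have -> : (1 + a.+2 + k = (a+k).+3)%N by lia.
have -> : (a + k.+1 = (a+k).+1)%N by lia.
have -> : (a.+2 + k.+1 = (a+k).+3)%N by lia.
have -> : ((k + d).+1 + a.+2 = (a+k).+3 + d)%N by lia.
have -> : ((k + d) + a.+2 = (a+k).+2 + d)%N by lia.
have -> : ((k + d).+1 + a = (a+k).+1 + d)%N by lia.
rewrite binSR !binR.
have -> : ((a+k).+3 + d = (a+k+d).+3)%N by lia.
have -> : ((a+k).+2 + d = (a+k+d).+2)%N by lia.
have -> : ((a+k).+1 + d = (a+k+d).+1)%N by lia.
have -> : (k + d + a + 2 = (a+k+d).+2)%N by lia.
have -> : (k + d + a + 1 = (a+k+d).+1)%N by lia.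
rewrite (factSR _ (a+k+d).+2) (factSR _ (a+k+d).+1) (factSR _ (a+k).+2) (factSR _ (a+k).+1).
rewrite (factSR _ (k+d)) (factSR _ k).
field. by sidec.
Qed.



Lemma ODE (R : numFieldType) a m :
  L2op a ('X * P (m + a.+2) a.+2) + m.+1%:R *: ('X * P (m + a.+2) a.+2)
  = a.+1%:R *: P (m + a.+2) a.+2 :> {poly R}.
Proof.
apply/polyP => i; rewrite /L2op mulrBl !coefD coefN coefCM !coefZ !coefXM.
case: i => [|k] /=.
  rewrite coef_deriv coefXM /= coefP. ring.
rewrite !coef_deriv !coefXM /= !coefP.
case: (leqP k m) => Hk; last first.
  rewrite !lc_small; try lia; ring.
have [d ->] : exists d, m = (k + d)%N by exists (m - k)%N; rewrite subnKC.
rewrite /lc !exprS.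
have -> : (a.+2 + k.+1 = ((a+k).+2).+1)%N by lia.
have -> : (a.+2 + k = (a+k).+2)%N by lia.
have -> : (k + d + a.+2 = (a+k).+2 + d)%N by lia.
rewrite binSR (factSR _ k).
field. by sidec.
Qed.



Lemma L2Z (R : numFieldType) a (c : R) (p : {poly R}) : L2op a (c *: p) = c *: L2op a p.
Proof. by rewrite /L2op derivZ derivnZ scalerDr !scalerAr. Qed.

Lemma sgnsq (R : numFieldType) a : ((-1) ^+ a * (-1) ^+ a : R) = 1.
Proof. by rewrite -expr2 sqrr_sign. Qed.

Lemma P_const (R : numFieldType) a : P a a = 1 :> {poly R}.
Proof.
apply/polyP => k; rewrite coefP coefC /lc; case: k => [|k] /=.
  by rewrite addn0 binn expr0 fact0 mul1r divr1.
by rewrite bin_small ?mulr0 ?mul0r // -addSnnS leq_addr.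
Qed.

Theorem theorem2p3 (R : numFieldType) (alpha : nat) :
  (forall n : nat, (1 <= n)%N ->
     ((alpha.+2)`!)%:R *: (L2op alpha (Tpoly n alpha : {poly R}) + n%:R *: Tpoly n alpha)
       = - (poch n.+1%:R alpha * (alpha.+1)%:R * (alpha.+2)%:R) *: Laguerre n.-1 (alpha.+2)%:R
     /\
     L4op alpha (Laguerre n alpha%:R) + poch (n%:R : R) alpha.+2 *: Laguerre n alpha%:R
       = (poch n.+1%:R alpha * (alpha.+1)%:R * (alpha.+2)%:R) *: Laguerre n.-1 (alpha.+2)%:R)
  /\
  (L2op alpha (Tpoly 0 alpha : {poly R}) + 0%:R *: Tpoly 0 alpha = 0
   /\ L4op alpha (Laguerre 0 alpha%:R) + poch (0%:R : R) alpha.+2 *: Laguerre 0 alpha%:R = 0 :> {poly R}).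
Proof.
split.
  case=> [//|m] _ /=; split.
    rewrite /Tpoly /= !LaguerreP -scaleNr L2Z (scalerA m.+1%:R) (mulrC m.+1%:R).
    rewrite -(scalerA _ m.+1%:R) -scalerDr ODE !scalerA; congr (_ *: _).
    rewrite /tcoef !pochnat.
    have -> : (alpha.+1 + m = m.+1 + alpha)%N by lia.
    rewrite (factSR _ alpha.+1). field. by sidec.
  rewrite !LaguerreP /L4op Qlem expD !expZ !iterP !pochnat -Fin.
  congr (_ + _).
  rewrite scalerAr; congr ('X * _).
  rewrite scalerDr !scalerA.
  have E : ((-1) ^+ alpha.+2 : R) = - (-1) ^+ alpha.+1 by rewrite exprS mulN1r.
  rewrite E; set s := ((-1) ^+ alpha.+1 : R).
  have sq : s * s = 1 by rewrite /s sgnsq.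
  rewrite -scaleNr; congr (_ *: _ + _ *: _); rewrite -[RHS]mulr1 -sq; ring.
split.
  by rewrite /Tpoly /L2op scaler0 addr0 !raddf0 !mulr0 addr0.
rewrite LaguerreP add0n P_const /L4op mulr1 derivnXn ffact_small // mulr0n.
rewrite -(scale0r (0 : {poly R})) expZ !scale0r mulr0 scaler0 add0r.
by rewrite /poch big_ord_recl /= addr0 mul0r scale0r.
Qed.
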